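(* Let $T$ be a $\delta$-Jordan Lie supertriple system, $\psi:T\times T\times T\to T$ an even trilinear map, and for a formal variable $\lambda$ let $T_\lambda$ denote $T$ with the product $[x_1,x_2,x_3]_\lambda=[x_1,x_2,x_3]+\lambda\psi(x_1,x_2,x_3)$. Then $T_\lambda$ is a $\delta$-Jordan Lie supertriple system if and only if (i) $\psi$ itself defines a $\delta$-Jordan Lie supertriple system structure on $T$, and (ii) $\psi$ is a 3-cocycle of $T$, i.e. $d^3\psi=0$.
   Context: A $\delta$-Jordan Lie supertriple system ($\delta\in\{1,-1\}$) is a $\mathbb{Z}_2$-graded vector space $T$ with a trilinear product $[\cdot,\cdot,\cdot]$ such that, for all homogeneous $a,b,c,d,e$ (with $|a|$ the degree of $a$): $|[a,b,c]|=|a|+|b|+|c|$; $[b,a,c]=-\delta(-1)^{|a||b|}[a,b,c]$; $(-1)^{|a||c|}[a,b,c]+(-1)^{|b||a|}[b,c,a]+(-1)^{|c||b|}[c,a,b]=0$; and $[a,b,[c,d,e]]=[[a,b,c],d,e]+(-1)^{|c|(|a|+|b|)}[c,[a,b,d],e]+\delta(-1)^{(|a|+|b|)(|c|+|d|)}[c,d,[a,b,e]]$. ''$T_\lambda$ is a $\delta$-Jordan Lie supertriple system'' means these identities hold for $[\cdot,\cdot,\cdot]_\lambda$ identically in $\lambda$. With the adjoint representation $\theta(a,b)(x)=(-1)^{|x|(|a|+|b|)}[x,a,b]$, $D(a,b)(x)=\delta[a,b,x]$, and for a trilinear map $f$ of degree $|f|$ (here $|\psi|=0$): $d^{3}f(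x_1,\dots,x_5)=(-1)^{(|f|+|x_1|+|x_2|+|x_3|)(|x_4|+|x_5|)}\theta(x_4,x_5)f(x_1,x_2,x_3)-\delta(-1)^{(|f|+|x_1|+|x_2|)(|x_3|+|x_5|)+|x_4||x_5|}\theta(x_3,x_5)f(x_1,x_2,x_4)-\delta(-1)^{|f|(|x_1|+|x_2|)}D(x_1,x_2)f(x_3,x_4,x_5)+(-1)^{(|f|+|x_1|+|x_2|)(|x_3|+|x_4|)}D(x_3,x_4)f(x_1,x_2,x_5)+f([x_1,x_2,x_3],x_4,x_5)-f(x_1,x_2,[x_3,x_4,x_5])+(-1)^{|x_3|(|x_1|+|x_2|)}f(x_3,[x_1,x_2,x_4],x_5)+\delta(-1)^{(|x_1|+|x_2|)(|x_3|+|x_4|)}f(x_3,x_4,[x_1,x_2,x_5])$ for homogeneous $x_i$. *)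

(* Defs.v *)
From HB Require Import structures.
From mathcomp Require Import all_boot all_order all_algebra.
From mathcomp Require Import functions.
Set Implicit Arguments. Unset Strict Implicit. Unset Printing Implicit Defensive.
Import Order.TTheory GRing.Theory Num.Theory.
Local Open Scope ring_scope.

(* Degrees live in Z_2 = bool (addition = xor, product = &&). *)
Definition sgn (K : pzRingType) (b : bool) : K := (-1) ^+ b.

Section Defs.
Variables (K : fieldType).

Definition subspace_pred (V : lmodType K) (P : {pred V}) : Prop :=
  0 \in P /\ forall (a : K) (x y : V), x \in P -> y \in P -> a *: x + y \in P.

Definition Z2grading (V : lmodType K) (V0 V1 : {pred V}) : Prop :=
  [/\ subspace_pred V0, subspace_pred V1,
      (forall v : V, exists2 v0, v0 \in V0 & exists2 v1, v1 \in V1 & v = v0 + v1)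
    & (forall v : V, v \in V0 -> v \in V1 -> v = 0)].

Definition homog (V : lmodType K) (V0 V1 : {pred V}) (d : bool) (x : V) : Prop :=
  x \in (if d then V1 else V0).

Definition trilinear (V : lmodType K) (f : V -> V -> V -> V) : Prop :=
  [/\ forall (a : K) x x' y z, f (a *: x + x') y z = a *: f x y z + f x' y z,
      forall (a : K) x y y' z, f x (a *: y + y') z = a *: f x y z + f x y' z
    & forall (a : K) x y z z', f x y (a *: z + z') = a *: f x y z + f x y z'].

Definition jlsts_identities (W : lmodType K) (hom : bool -> W -> Prop)
    (delta : K) (br : W -> W -> W -> W) : Prop :=
  (forall (da db dc : bool) a b c, hom da a -> hom db b -> hom dc c ->
     hom (da (+) db (+) dc) (br a b c)) /\
  (forall (da db dc : bool) a b c, hom da a -> hom db b -> hom dc c ->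
     br b a c = - (delta * sgn K (da && db)) *: br a b c) /\
  (forall (da db dc : bool) a b c, hom da a -> hom db b -> hom dc c ->
     sgn K (da && dc) *: br a b c + sgn K (db && da) *: br b c a
       + sgn K (dc && db) *: br c a b = 0) /\
  (forall (da db dc dd de : bool) a b c d e,
     hom da a -> hom db b -> hom dc c -> hom dd d -> hom de e ->
     br a b (br c d e) =
       br (br a b c) d e
       + sgn K (dc && (da (+) db)) *: br c (br a b d) e
       + (delta * sgn K ((da (+) db) && (dc (+) dd))) *: br c d (br a b e)).

Definition is_JLSTS (V : lmodType K) (V0 V1 : {pred V}) (delta : K)
    (br : V -> V -> V -> V) : Prop :=
  trilinear br /\ jlsts_identities (homog V0 V1) delta br.

Definition even_map (V : lmodType K) (V0 V1 : {pred V}) (f : V -> V -> V -> V) :=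
  forall (d1 d2 d3 : bool) x y z, homog V0 V1 d1 x -> homog V0 V1 d2 y ->
    homog V0 V1 d3 z -> homog V0 V1 (d1 (+) d2 (+) d3) (f x y z).

(* ---- The deformation T_lambda, lambda a formal variable. ----
   Elements of T[[lambda]] are coefficient sequences p : nat -> V
   (p n = coefficient of lambda^n); the product of T is extended
   K[[lambda]]-trilinearly (Cauchy product), and
   [x,y,z]_lambda = [x,y,z] + lambda psi(x,y,z). *)
Definition ext3 (V : lmodType K) (f : V -> V -> V -> V)
    (p q r : nat -> V) (n : nat) : V :=
  \sum_(i < n.+1) \sum_(j < (n - i).+1) f (p i) (q j) (r (n - i - j)%N).

Definition br_lambda (V : lmodType K) (br psi : V -> V -> V -> V)
    (p q r : nat -> V) : nat -> V :=
  fun n => ext3 br p q r n + (if n is m.+1 then ext3 psi p q r m else 0).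

Definition homog_lambda (V : lmodType K) (V0 V1 : {pred V}) (d : bool)
    (p : nat -> V) : Prop := forall n, homog V0 V1 d (p n).

Definition theta (V : lmodType K) (br : V -> V -> V -> V)
    (da db : bool) (a b : V) (dx : bool) (x : V) : V :=
  sgn K (dx && (da (+) db)) *: br x a b.
Definition Dop (V : lmodType K) (delta : K) (br : V -> V -> V -> V)
    (a b x : V) : V := delta *: br a b x.

Definition d3 (V : lmodType K) (delta : K) (br f : V -> V -> V -> V)
    (df d1 d2 d3 d4 d5 : bool) (x1 x2 x3 x4 x5 : V) : V :=
    sgn K ((df (+) d1 (+) d2 (+) d3) && (d4 (+) d5)) *:
      theta br d4 d5 x4 x5 (df (+) d1 (+) d2 (+) d3) (f x1 x2 x3)
  - (delta * sgn K (((df (+) d1 (+) d2) && (d3 (+) d5)) (+) (d4 && d5))) *: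
      theta br d3 d5 x3 x5 (df (+) d1 (+) d2 (+) d4) (f x1 x2 x4)
  - (delta * sgn K (df && (d1 (+) d2))) *: Dop delta br x1 x2 (f x3 x4 x5)
  + sgn K ((df (+) d1 (+) d2) && (d3 (+) d4)) *: Dop delta br x3 x4 (f x1 x2 x5)
  + f (br x1 x2 x3) x4 x5
  - f x1 x2 (br x3 x4 x5)
  + sgn K (d3 && (d1 (+) d2)) *: f x3 (br x1 x2 x4) x5
  + (delta * sgn K ((d1 (+) d2) && (d3 (+) d4))) *: f x3 x4 (br x1 x2 x5).

Definition cocycle3 (V : lmodType K) (V0 V1 : {pred V}) (delta : K)
    (br psi : V -> V -> V -> V) : Prop :=
  forall (d1 d2 d3' d4 d5 : bool) x1 x2 x3 x4 x5,
    homog V0 V1 d1 x1 -> homog V0 V1 d2 x2 -> homog V0 V1 d3' x3 ->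
    homog V0 V1 d4 x4 -> homog V0 V1 d5 x5 ->
    d3 delta br psi false d1 d2 d3' d4 d5 x1 x2 x3 x4 x5 = 0.

End Defs.

(* Main.v *)
Require Import Defs.
From HB Require Import structures.
From mathcomp Require Import all_boot all_order all_algebra.
From mathcomp Require Import functions.
From mathcomp Require Import zify.
From Stdlib Require Import FunctionalExtensionality.
Set Implicit Arguments. Unset Strict Implicit. Unset Printing Implicit Defensive.
Import Order.TTheory GRing.Theory Num.Theory.
Local Open Scope ring_scope.

Section Basics.
Variables (K : fieldType) (V : lmodType K).
Implicit Types (f : V -> V -> V -> V).

Lemma tri0l f y z : trilinear f -> f 0 y z = 0.
Proof.
case=> H _ _; have := H 1 0 0 y z; rewrite !scale1r addr0 => E.
by apply: (addrI (f 0 y z)); rewrite addr0 -E.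
Qed.
Lemma tri0m f x z : trilinear f -> f x 0 z = 0.
Proof.
case=> _ H _; have := H 1 x 0 0 z; rewrite !scale1r addr0 => E.
by apply: (addrI (f x 0 z)); rewrite addr0 -E.
Qed.
Lemma tri0r f x y : trilinear f -> f x y 0 = 0.
Proof.
case=> _ _ H; have := H 1 x y 0 0; rewrite !scale1r addr0 => E.
by apply: (addrI (f x y 0)); rewrite addr0 -E.
Qed.
Lemma triDl f x x' y z : trilinear f -> f (x + x') y z = f x y z + f x' y z.
Proof. by case=> H _ _; have := H 1 x x' y z; rewrite !scale1r. Qed.
Lemma triDm f x y y' z : trilinear f -> f x (y + y') z = f x y z + f x y' z.
Proof. by case=> _ H _; have := H 1 x y y' z; rewrite !scale1r. Qed.
Lemma triDr f x y z z' : trilinear f -> f x y (z + z') = f x y z + f x y z'.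
Proof. by case=> _ _ H; have := H 1 x y z z'; rewrite !scale1r. Qed.

Lemma tri_suml f (I : Type) (r : seq I) (P : pred I) (X : I -> V) y z :
  trilinear f -> f (\sum_(t <- r | P t) X t) y z = \sum_(t <- r | P t) f (X t) y z.
Proof.
move=> Hf; apply: (big_morph (fun x => f x y z)) => [x x'|]; 
  [exact: triDl | exact: tri0l].
Qed.
Lemma tri_summ f (I : Type) (r : seq I) (P : pred I) (X : I -> V) x z :
  trilinear f -> f x (\sum_(t <- r | P t) X t) z = \sum_(t <- r | P t) f x (X t) z.
Proof.
move=> Hf; apply: (big_morph (fun y => f x y z)) => [y y'|]; 
  [exact: triDm | exact: tri0m].
Qed.
Lemma tri_sumr f (I : Type) (r : seq I) (P : pred I) (X : I -> V) x y :
  trilinear f -> f x y (\sum_(t <- r | P t) X t) = \sum_(t <- r | P t) f x y (X t).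
Proof.
move=> Hf; apply: (big_morph (fun z => f x y z)) => [z z'|]; 
  [exact: triDr | exact: tri0r].
Qed.

Definition mono (i : nat) (x : V) : nat -> V := fun m => if m == i then x else 0.

Lemma ext3_sum1 f (I : finType) (P : I -> nat -> V) q r n : trilinear f ->
  ext3 f (fun m => \sum_(t : I) P t m) q r n = \sum_(t : I) ext3 f (P t) q r n.
Proof.
move=> Hf; rewrite /ext3.
under eq_bigr => i _ do under eq_bigr => j _ do rewrite tri_suml //.
under eq_bigr => i _ do rewrite exchange_big.
by rewrite exchange_big.
Qed.
Lemma ext3_sum2 f (I : finType) (P : I -> nat -> V) p r n : trilinear f ->
  ext3 f p (fun m => \sum_(t : I) P t m) r n = \sum_(t : I) ext3 f p (P t) r n.
Proof.
move=> Hf; rewrite /ext3.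
under eq_bigr => i _ do under eq_bigr => j _ do rewrite tri_summ //.
under eq_bigr => i _ do rewrite exchange_big.
by rewrite exchange_big.
Qed.
Lemma ext3_sum3 f (I : finType) (P : I -> nat -> V) p q n : trilinear f ->
  ext3 f p q (fun m => \sum_(t : I) P t m) n = \sum_(t : I) ext3 f p q (P t) n.
Proof.
move=> Hf; rewrite /ext3.
under eq_bigr => i _ do under eq_bigr => j _ do rewrite tri_sumr //.
under eq_bigr => i _ do rewrite exchange_big.
by rewrite exchange_big.
Qed.
Lemma ext3_add1 f p p' q r n : trilinear f ->
  ext3 f (fun m => p m + p' m) q r n = ext3 f p q r n + ext3 f p' q r n.
Proof.
move=> Hf; rewrite /ext3 -big_split; apply: eq_bigr => i _.
by rewrite -big_split; apply: eq_bigr => j _; rewrite triDl.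
Qed.
Lemma ext3_add2 f p q q' r n : trilinear f ->
  ext3 f p (fun m => q m + q' m) r n = ext3 f p q r n + ext3 f p q' r n.
Proof.
move=> Hf; rewrite /ext3 -big_split; apply: eq_bigr => i _.
by rewrite -big_split; apply: eq_bigr => j _; rewrite triDm.
Qed.
Lemma ext3_add3 f p q r r' n : trilinear f ->
  ext3 f p q (fun m => r m + r' m) n = ext3 f p q r n + ext3 f p q r' n.
Proof.
move=> Hf; rewrite /ext3 -big_split; apply: eq_bigr => i _.
by rewrite -big_split; apply: eq_bigr => j _; rewrite triDr.
Qed.

Lemma ext3_mono f i j k x y z n : trilinear f ->
  ext3 f (mono i x) (mono j y) (mono k z) n = mono (i + j + k) (f x y z) n.
Proof.
move=> Hf; rewrite /ext3 /mono; case: (boolP (n == (i + j + k)%N)) => Hn.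
  move/eqP: Hn => Hn.
  have Hi : (i < n.+1)%N by lia.
  rewrite (bigD1 (Ordinal Hi)) //= [X in _ + X = _]big1 ?addr0; last first.
    move=> i' Hi'; rewrite big1 // => j' _.
    have -> : (nat_of_ord i' == i) = false.
      by apply/negbTE; move: Hi'; rewrite -val_eqE.
    exact: tri0l.
  have Hj : (j < (n - i).+1)%N by lia.
  rewrite (bigD1 (Ordinal Hj)) //= big1 ?addr0; last first.
    move=> j' Hj'; have -> : (nat_of_ord j' == j) = false.
      by apply/negbTE; move: Hj'; rewrite -val_eqE.
    by rewrite eqxx tri0m.
  have -> : (n - i - j == k)%N by apply/eqP; lia.
  by rewrite !eqxx.
rewrite big1 // => i' _; rewrite big1 // => j' _.
case: eqP => [Ei|_]; last by rewrite tri0l.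
case: eqP => [Ej|_]; last by rewrite tri0m.
case: eqP => [Ek|_]; last by rewrite tri0r.
have := ltn_ord i'; have := ltn_ord j'; move: Hn; lia.
Qed.

Lemma loc_ext3 f p p' q q' r r' n :
  (forall m, (m <= n)%N -> p m = p' m) ->
  (forall m, (m <= n)%N -> q m = q' m) ->
  (forall m, (m <= n)%N -> r m = r' m) ->
  ext3 f p q r n = ext3 f p' q' r' n.
Proof.
move=> Hp Hq Hr; rewrite /ext3; apply: eq_bigr => i _; apply: eq_bigr => j _.
have := ltn_ord i; have := ltn_ord j => Hj Hi.
by rewrite Hp ?Hq ?Hr //; lia.
Qed.

Variables (br psi : V -> V -> V -> V).
Hypotheses (Hbr : trilinear br) (Hpsi : trilinear psi).
Local Notation BL := (br_lambda br psi).

Lemma loc_bl p p' q q' r r' n :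
  (forall m, (m <= n)%N -> p m = p' m) ->
  (forall m, (m <= n)%N -> q m = q' m) ->
  (forall m, (m <= n)%N -> r m = r' m) ->
  forall m, (m <= n)%N -> BL p q r m = BL p' q' r' m.
Proof.
move=> Hp Hq Hr m Hm; rewrite /br_lambda.
have L : forall g, (forall m, (m <= n)%N -> g m = g m) by [].
rewrite (@loc_ext3 _ p p' q q' r r' m); try (move=> m' Hm'; 
  first [apply: Hp | apply: Hq | apply: Hr]; exact: leq_trans Hm' Hm).
case: m Hm => [|m] Hm //.
rewrite (@loc_ext3 _ p p' q q' r r' m) // => m' Hm'; 
  first [apply: Hp | apply: Hq | apply: Hr]; lia.
Qed.

Lemma bl_mono i j k x y z :
  BL (mono i x) (mono j y) (mono k z) =
  fun m => mono (i + j + k) (br x y z) m + mono (i + j + k).+1 (psi x y z) m.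
Proof.
apply: functional_extensionality => m; rewrite /br_lambda ext3_mono //.
case: m => [|m]; first by rewrite /mono.
by rewrite ext3_mono // /mono eqSS.
Qed.

Lemma bl_add1 p p' q r :
  BL (fun m => p m + p' m) q r = fun m => BL p q r m + BL p' q r m.
Proof.
apply: functional_extensionality => m; rewrite /br_lambda ext3_add1 //.
case: m => [|m]; first by rewrite !addr0.
by rewrite ext3_add1 // addrACA.
Qed.
Lemma bl_add2 p q q' r :
  BL p (fun m => q m + q' m) r = fun m => BL p q r m + BL p q' r m.
Proof.
apply: functional_extensionality => m; rewrite /br_lambda ext3_add2 //.
case: m => [|m]; first by rewrite !addr0.
by rewrite ext3_add2 // addrACA.
Qed.
Lemma bl_add3 p q r r' :
  BL p q (fun m => r m + r' m) = fun m => BL p q r m + BL p q r' m.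
Proof.
apply: functional_extensionality => m; rewrite /br_lambda ext3_add3 //.
case: m => [|m]; first by rewrite !addr0.
by rewrite ext3_add3 // addrACA.
Qed.

Lemma bl_sum1 (I : finType) (P : I -> nat -> V) q r :
  BL (fun m => \sum_(t : I) P t m) q r = fun m => \sum_(t : I) BL (P t) q r m.
Proof.
apply: functional_extensionality => m; rewrite /br_lambda ext3_sum1 //.
case: m => [|m]; first by rewrite addr0; apply: eq_bigr => t _; rewrite addr0.
by rewrite ext3_sum1 // big_split.
Qed.
Lemma bl_sum2 (I : finType) (P : I -> nat -> V) p r :
  BL p (fun m => \sum_(t : I) P t m) r = fun m => \sum_(t : I) BL p (P t) r m.
Proof.
apply: functional_extensionality => m; rewrite /br_lambda ext3_sum2 //.
case: m => [|m]; first by rewrite addr0; apply: eq_bigr => t _; rewrite addr0.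
by rewrite ext3_sum2 // big_split.
Qed.
Lemma bl_sum3 (I : finType) (P : I -> nat -> V) p q :
  BL p q (fun m => \sum_(t : I) P t m) = fun m => \sum_(t : I) BL p q (P t) m.
Proof.
apply: functional_extensionality => m; rewrite /br_lambda ext3_sum3 //.
case: m => [|m]; first by rewrite addr0; apply: eq_bigr => t _; rewrite addr0.
by rewrite ext3_sum3 // big_split.
Qed.


Definition ite2 (S m : nat) (X0 X1 : V) : V :=
  if m == S then X0 else if m == S.+1 then X1 else 0.
Definition ite3 (S m : nat) (X0 X1 X2 : V) : V :=
  if m == S then X0 else if m == S.+1 then X1 else if m == S.+2 then X2 else 0.

Lemma bl_mono_ite a b c x y z m :
  BL (mono a x) (mono b y) (mono c z) m = ite2 (a + b + c) m (br x y z) (psi x y z).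
Proof.
rewrite bl_mono /mono /ite2.
by repeat case: eqP => ?; try (exfalso; lia); rewrite ?addr0 ?add0r.
Qed.

Lemma nest_r a b c d e x y z u w m :
  BL (mono a x) (mono b y) (BL (mono c z) (mono d u) (mono e w)) m =
  ite3 (a + b + c + d + e) m (br x y (br z u w))
     (psi x y (br z u w) + br x y (psi z u w)) (psi x y (psi z u w)).
Proof.
rewrite bl_mono bl_add3 !bl_mono /mono /ite3 /=.
by repeat case: eqP => ?; try (exfalso; lia); rewrite ?addr0 ?add0r.
Qed.

Lemma nest_l a b c d e x y z u w m :
  BL (BL (mono a x) (mono b y) (mono c z)) (mono d u) (mono e w) m =
  ite3 (a + b + c + d + e) m (br (br x y z) u w)
     (psi (br x y z) u w + br (psi x y z) u w) (psi (psi x y z) u w).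
Proof.
rewrite bl_mono bl_add1 !bl_mono /mono /ite3 /=.
by repeat case: eqP => ?; try (exfalso; lia); rewrite ?addr0 ?add0r.
Qed.

Lemma nest_m a b c d e x y z u w m :
  BL (mono c z) (BL (mono a x) (mono b y) (mono d u)) (mono e w) m =
  ite3 (a + b + c + d + e) m (br z (br x y u) w)
     (psi z (br x y u) w + br z (psi x y u) w) (psi z (psi x y u) w).
Proof.
rewrite bl_mono bl_add2 !bl_mono /mono /ite3 /=.
by repeat case: eqP => ?; try (exfalso; lia); rewrite ?addr0 ?add0r.
Qed.

Lemma nest_rr a b c d e x y z u w m :
  BL (mono c z) (mono d u) (BL (mono a x) (mono b y) (mono e w)) m =
  ite3 (a + b + c + d + e) m (br z u (br x y w))
     (psi z u (br x y w) + br z u (psi x y w)) (psi z u (psi x y w)).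
Proof.
rewrite bl_mono bl_add3 !bl_mono /mono /ite3 /=.
by repeat case: eqP => ?; try (exfalso; lia); rewrite ?addr0 ?add0r.
Qed.

Section Exp.
Variable I : finType.

Lemma exp3 (P Q R : I -> nat -> V) :
  BL (fun m => \sum_(a : I) P a m) (fun m => \sum_(b : I) Q b m)
     (fun m => \sum_(c : I) R c m) =
  fun m => \sum_(a : I) \sum_(b : I) \sum_(c : I) BL (P a) (Q b) (R c) m.
Proof.
rewrite bl_sum1; apply: functional_extensionality => m; apply: eq_bigr => a _.
rewrite bl_sum2; apply: eq_bigr => b _; by rewrite bl_sum3.
Qed.

Lemma bl_sum1_3 (X : I -> I -> I -> nat -> V) q r :
  BL (fun m => \sum_(a : I) \sum_(b : I) \sum_(c : I) X a b c m) q r =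
  fun m => \sum_(a : I) \sum_(b : I) \sum_(c : I) BL (X a b c) q r m.
Proof.
rewrite bl_sum1; apply: functional_extensionality => m; apply: eq_bigr => a _.
rewrite bl_sum1; apply: eq_bigr => b _; by rewrite bl_sum1.
Qed.
Lemma bl_sum2_3 (X : I -> I -> I -> nat -> V) p r :
  BL p (fun m => \sum_(a : I) \sum_(b : I) \sum_(c : I) X a b c m) r =
  fun m => \sum_(a : I) \sum_(b : I) \sum_(c : I) BL p (X a b c) r m.
Proof.
rewrite bl_sum2; apply: functional_extensionality => m; apply: eq_bigr => a _.
rewrite bl_sum2; apply: eq_bigr => b _; by rewrite bl_sum2.
Qed.
Lemma bl_sum3_3 (X : I -> I -> I -> nat -> V) p q :
  BL p q (fun m => \sum_(a : I) \sum_(b : I) \sum_(c : I) X a b c m) =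
  fun m => \sum_(a : I) \sum_(b : I) \sum_(c : I) BL p q (X a b c) m.
Proof.
rewrite bl_sum3; apply: functional_extensionality => m; apply: eq_bigr => a _.
rewrite bl_sum3; apply: eq_bigr => b _; by rewrite bl_sum3.
Qed.

Definition S5 (F : I -> I -> I -> I -> I -> V) : V :=
  \sum_(a : I) \sum_(b : I) \sum_(c : I) \sum_(d : I) \sum_(e : I) F a b c d e.

Lemma exp_r (P Q : I -> nat -> V) (X : I -> I -> I -> nat -> V) m :
  BL (fun m => \sum_(a : I) P a m) (fun m => \sum_(b : I) Q b m)
     (fun m => \sum_(c : I) \sum_(d : I) \sum_(e : I) X c d e m) m =
  S5 (fun a b c d e => BL (P a) (Q b) (X c d e) m).
Proof.
rewrite bl_sum1 /S5; apply: eq_bigr => a _.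
rewrite bl_sum2; apply: eq_bigr => b _; by rewrite bl_sum3_3.
Qed.

Lemma exp_l (Q R : I -> nat -> V) (X : I -> I -> I -> nat -> V) m :
  BL (fun m => \sum_(a : I) \sum_(b : I) \sum_(c : I) X a b c m)
     (fun m => \sum_(d : I) Q d m) (fun m => \sum_(e : I) R e m) m =
  S5 (fun a b c d e => BL (X a b c) (Q d) (R e) m).
Proof.
rewrite bl_sum1_3 /S5; apply: eq_bigr => a _; apply: eq_bigr => b _;
  apply: eq_bigr => c _.
rewrite bl_sum2; apply: eq_bigr => d _; by rewrite bl_sum3.
Qed.

Lemma exp_m (P R : I -> nat -> V) (X : I -> I -> I -> nat -> V) m :
  BL (fun m => \sum_(c : I) P c m)
     (fun m => \sum_(a : I) \sum_(b : I) \sum_(d : I) X a b d m)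
     (fun m => \sum_(e : I) R e m) m =
  S5 (fun a b c d e => BL (P c) (X a b d) (R e) m).
Proof.
rewrite bl_sum1 /S5.
under eq_bigr => c _ do rewrite bl_sum2_3.
under eq_bigr => c _ do under eq_bigr => a _ do under eq_bigr => b _ do
  under eq_bigr => d _ do rewrite bl_sum3.
rewrite exchange_big; apply: eq_bigr => a _.
by rewrite exchange_big.
Qed.

Lemma exp_rr (P Q : I -> nat -> V) (X : I -> I -> I -> nat -> V) m :
  BL (fun m => \sum_(c : I) P c m) (fun m => \sum_(d : I) Q d m)
     (fun m => \sum_(a : I) \sum_(b : I) \sum_(e : I) X a b e m) m =
  S5 (fun a b c d e => BL (P c) (Q d) (X a b e) m).
Proof.
rewrite bl_sum1 /S5.
under eq_bigr => c _ do rewrite bl_sum2.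
under eq_bigr => c _ do under eq_bigr => d _ do rewrite bl_sum3_3.
(* order c d a b e *)
under eq_bigr => c _ do rewrite exchange_big.
(* c a d b e *)
under eq_bigr => c _ do under eq_bigr => a _ do rewrite exchange_big.
(* c a b d e *)
rewrite exchange_big; apply: eq_bigr => a _.
by rewrite exchange_big.
Qed.

End Exp.

Lemma S5_add (I : finType) (F G : I -> I -> I -> I -> I -> V) :
  S5 F + S5 G = S5 (fun a b c d e => F a b c d e + G a b c d e).
Proof.
rewrite /S5 -big_split; apply: eq_bigr => a _; rewrite -big_split;
apply: eq_bigr => b _; rewrite -big_split; apply: eq_bigr => c _;
rewrite -big_split; apply: eq_bigr => d _; by rewrite -big_split.
Qed.
Lemma S5_scale (I : finType) (k : K) (F : I -> I -> I -> I -> I -> V) :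
  k *: S5 F = S5 (fun a b c d e => k *: F a b c d e).
Proof.
rewrite /S5 scaler_sumr; apply: eq_bigr => a _; rewrite scaler_sumr;
apply: eq_bigr => b _; rewrite scaler_sumr; apply: eq_bigr => c _;
rewrite scaler_sumr; apply: eq_bigr => d _; by rewrite scaler_sumr.
Qed.

Definition Tr (N : nat) (p : nat -> V) := fun m => \sum_(i < N) mono i (p i) m.
Lemma Tr_ok N p m : (m < N)%N -> p m = Tr N p m.
Proof.
move=> Hm; rewrite /Tr /mono (bigD1 (Ordinal Hm)) //= eqxx big1 ?addr0 // => i Hi.
have -> : (m == i) = false; last by [].
by apply/negbTE; move: Hi; rewrite -val_eqE eq_sym.
Qed.

Lemma back4 n (p q u v w : nat -> V) (c1 c2 : K) :
  (forall a b c d e : 'I_n.+1,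
    BL (mono a (p a)) (mono b (q b)) (BL (mono c (u c)) (mono d (v d)) (mono e (w e))) n
    = BL (BL (mono a (p a)) (mono b (q b)) (mono c (u c))) (mono d (v d)) (mono e (w e)) n
      + c1 *: BL (mono c (u c)) (BL (mono a (p a)) (mono b (q b)) (mono d (v d))) (mono e (w e)) n
      + c2 *: BL (mono c (u c)) (mono d (v d)) (BL (mono a (p a)) (mono b (q b)) (mono e (w e))) n) ->
  BL p q (BL u v w) n = BL (BL p q u) v w n + c1 *: BL u (BL p q v) w n
     + c2 *: BL u v (BL p q w) n.
Proof.
move=> H.
have T : forall g : nat -> V, forall m, (m <= n)%N -> g m = Tr n.+1 g m.
  by move=> g m Hm; apply: Tr_ok.
have TB : forall g1 g2 g3 : nat -> V, forall m, (m <= n)%N ->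
    BL g1 g2 g3 m = BL (Tr n.+1 g1) (Tr n.+1 g2) (Tr n.+1 g3) m.
  by move=> g1 g2 g3; apply: loc_bl; apply: T.
rewrite (loc_bl (T p) (T q) (TB u v w)) //.
rewrite (loc_bl (TB p q u) (T v) (T w)) //.
rewrite (loc_bl (T u) (TB p q v) (T w)) //.
rewrite (loc_bl (T u) (T v) (TB p q w)) //.
rewrite /Tr.
pose M (g : nat -> V) := fun a : 'I_n.+1 => mono a (g a).
rewrite (exp3 (M u) (M v) (M w)) (exp3 (M p) (M q) (M u)) (exp3 (M p) (M q) (M v))
  (exp3 (M p) (M q) (M w)).
rewrite exp_r exp_l exp_m exp_rr !S5_scale !S5_add.
rewrite /S5; do 5 (apply: eq_bigr => ? _).
exact: H.
Qed.

Definition S3 (I : finType) (F : I -> I -> I -> V) : V :=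
  \sum_(a : I) \sum_(b : I) \sum_(c : I) F a b c.
Lemma S3_add (I : finType) (F G : I -> I -> I -> V) :
  S3 F + S3 G = S3 (fun a b c => F a b c + G a b c).
Proof.
rewrite /S3 -big_split; apply: eq_bigr => a _; rewrite -big_split;
apply: eq_bigr => b _; by rewrite -big_split.
Qed.
Lemma S3_scale (I : finType) (k : K) (F : I -> I -> I -> V) :
  k *: S3 F = S3 (fun a b c => k *: F a b c).
Proof.
rewrite /S3 scaler_sumr; apply: eq_bigr => a _; rewrite scaler_sumr;
apply: eq_bigr => b _; by rewrite scaler_sumr.
Qed.

Lemma TB_loc n (g1 g2 g3 : nat -> V) :
  BL g1 g2 g3 n = BL (Tr n.+1 g1) (Tr n.+1 g2) (Tr n.+1 g3) n.
Proof.
have T : forall g : nat -> V, forall m, (m <= n)%N -> g m = Tr n.+1 g m.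
  by move=> g m Hm; apply: Tr_ok.
exact: (loc_bl (T g1) (T g2) (T g3)).
Qed.

Lemma back_skew n (p q r : nat -> V) (k : K) :
  (forall a b c : 'I_n.+1, BL (mono b (q b)) (mono a (p a)) (mono c (r c)) n
      = k *: BL (mono a (p a)) (mono b (q b)) (mono c (r c)) n) ->
  BL q p r n = k *: BL p q r n.
Proof.
move=> H; rewrite (TB_loc n q) (TB_loc n p) /Tr !exp3 exchange_big.
rewrite scaler_sumr; apply: eq_bigr => a _; rewrite scaler_sumr;
apply: eq_bigr => b _; rewrite scaler_sumr; apply: eq_bigr => c _.
exact: H.
Qed.

Lemma back_jac n (p q r : nat -> V) (k1 k2 k3 : K) :
  (forall a b c : 'I_n.+1,
      k1 *: BL (mono a (p a)) (mono b (q b)) (mono c (r c)) n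
    + k2 *: BL (mono b (q b)) (mono c (r c)) (mono a (p a)) n
    + k3 *: BL (mono c (r c)) (mono a (p a)) (mono b (q b)) n = 0) ->
  k1 *: BL p q r n + k2 *: BL q r p n + k3 *: BL r p q n = 0.
Proof.
move=> H; rewrite (TB_loc n p) (TB_loc n q) (TB_loc n r) /Tr !exp3.
have E2 : forall F : 'I_n.+1 -> 'I_n.+1 -> 'I_n.+1 -> V,
    \sum_b \sum_c \sum_a F a b c = S3 F.
  move=> F; under eq_bigr => b _ do rewrite exchange_big.
  by rewrite exchange_big.
have E3 : forall F : 'I_n.+1 -> 'I_n.+1 -> 'I_n.+1 -> V,
    \sum_c \sum_a \sum_b F a b c = S3 F.
  move=> F; rewrite exchange_big; apply: eq_bigr => a _.
  by rewrite exchange_big.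
rewrite E2 E3 -/(S3 _) !S3_scale !S3_add.
by rewrite /S3 big1 // => a _; rewrite big1 // => b _; rewrite big1 // => c _; apply: H.
Qed.

Lemma sgnF : sgn K false = 1. Proof. by rewrite /sgn expr0. Qed.
Lemma sgn_add a b : sgn K (a (+) b) = sgn K a * sgn K b.
Proof. by case: a; case: b; rewrite /sgn /= ?expr0 ?expr1 ?mulr1 ?mul1r ?mulrNN ?mulr1. Qed.
Lemma sgn_sq a : sgn K a * sgn K a = 1.
Proof. by case: a; rewrite /sgn /= ?expr0 ?expr1 ?mulr1 ?mulrNN ?mulr1. Qed.

Lemma ac8 (a b c e f g h i : V) :
  a - b - c + e + f - g + h + i = a + f + (- b + h) + (e + i) - (c + g).
Proof. by rewrite opprD !addrA (ACl (1*5*2*7*4*8*3*6))%AC. Qed.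

Variables (V0 V1 : {pred V}) (delta : K).
Hypothesis Hd2 : delta * delta = 1.
Hypothesis Hskew : forall (da db dc : bool) a b c, homog V0 V1 da a ->
  homog V0 V1 db b -> homog V0 V1 dc c ->
  br b a c = - (delta * sgn K (da && db)) *: br a b c.
Hypothesis Hev : even_map V0 V1 psi.

Definition E1 (d1 d2 d3 d4 : bool) (x y z u w : V) : Prop :=
  psi x y (br z u w) + br x y (psi z u w) =
  (psi (br x y z) u w + br (psi x y z) u w)
  + sgn K (d3 && (d1 (+) d2)) *: (psi z (br x y u) w + br z (psi x y u) w)
  + (delta * sgn K ((d1 (+) d2) && (d3 (+) d4))) *:
       (psi z u (br x y w) + br z u (psi x y w)).

Lemma d3_E1 d1 d2 d3' d4 d5 x1 x2 x3 x4 x5 :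
  homog V0 V1 d1 x1 -> homog V0 V1 d2 x2 -> homog V0 V1 d3' x3 ->
  homog V0 V1 d4 x4 -> homog V0 V1 d5 x5 ->
  d3 delta br psi false d1 d2 d3' d4 d5 x1 x2 x3 x4 x5 =
  ((psi (br x1 x2 x3) x4 x5 + br (psi x1 x2 x3) x4 x5)
  + sgn K (d3' && (d1 (+) d2)) *: (psi x3 (br x1 x2 x4) x5 + br x3 (psi x1 x2 x4) x5)
  + (delta * sgn K ((d1 (+) d2) && (d3' (+) d4))) *:
       (psi x3 x4 (br x1 x2 x5) + br x3 x4 (psi x1 x2 x5)))
  - (psi x1 x2 (br x3 x4 x5) + br x1 x2 (psi x3 x4 x5)).
Proof.
move=> h1 h2 h3 h4 h5.
have hP := Hev h1 h2 h4.
rewrite (Hskew hP h3 h5).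
rewrite /d3 /theta /Dop /= sgnF !scalerA sgn_sq scale1r mulr1 Hd2 scale1r.
have ec : sgn K (d3' && (d1 (+) d2)) * (delta * sgn K ((d1 (+) d2 (+) d4) && d3'))
  = delta * sgn K ((d1 (+) d2) && (d3' (+) d5) (+) d4 && d5) *
   sgn K ((d1 (+) d2 (+) d4) && (d3' (+) d5)).
  rewrite mulrCA -!mulrA -!sgn_add; congr (_ * sgn K _).
  by case: d1 d2 d3' d4 d5 {h1 h2 h3 h4 h5 hP} => [] [] [] [] [].
rewrite !scalerDr scalerA mulrN scaleNr ec [sgn K _ * delta]mulrC.
rewrite !opprD !addrA.
by rewrite [LHS](ACl (5*1*7*2*8*4*6*3))%AC.
Qed.

Hypothesis Hz : forall d, homog V0 V1 d 0.
Hypothesis HomD : forall d x y, homog V0 V1 d x -> homog V0 V1 d y ->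
  homog V0 V1 d (x + y).

Lemma evZ (k : K) (F : nat -> V) n : (k *: F) n = k *: F n. Proof. by []. Qed.
Lemma evD (F G : nat -> V) n : (F + G) n = F n + G n. Proof. by []. Qed.
Lemma ev0 n : (0 : nat -> V) n = 0. Proof. by []. Qed.

Lemma comb S m (L0 L1 L2 B0 B1 B2 C0 C1 C2 D0 D1 D2 : V) (c1 c2 : K) :
  L0 = B0 + c1 *: C0 + c2 *: D0 -> L1 = B1 + c1 *: C1 + c2 *: D1 ->
  L2 = B2 + c1 *: C2 + c2 *: D2 ->
  ite3 S m L0 L1 L2 = ite3 S m B0 B1 B2 + c1 *: ite3 S m C0 C1 C2
    + c2 *: ite3 S m D0 D1 D2.
Proof.
move=> e0 e1 e2; rewrite /ite3.
case: ifP => _ //; case: ifP => _ //; case: ifP => _ //.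
by rewrite !scaler0 !addr0.
Qed.

Lemma fwd : jlsts_identities (homog_lambda V0 V1) delta (br_lambda br psi) ->
  jlsts_identities (homog V0 V1) delta psi /\ cocycle3 V0 V1 delta br psi.
Proof.
move=> [Lcl [Lsk [Ljac Lid]]].
have hm : forall d x, homog V0 V1 d x -> homog_lambda V0 V1 d (mono 0 x).
  by move=> d x hx m; rewrite /mono; case: eqP => _ //; exact: Hz.
split; [split; [|split; [|split]] |].
- by move=> da db dc a b c ha hb hc; exact: Hev.
- move=> da db dc a b c ha hb hc.
  have E := f_equal (fun f : nat -> V => f 1%N)
    (Lsk da db dc _ _ _ (hm _ _ ha) (hm _ _ hb) (hm _ _ hc)).
  cbv beta in E; rewrite evZ !bl_mono_ite /ite2 /= in E; exact E.
- move=> da db dc a b c ha hb hc.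
  have E := f_equal (fun f : nat -> V => f 1%N)
    (Ljac da db dc _ _ _ (hm _ _ ha) (hm _ _ hb) (hm _ _ hc)).
  cbv beta in E; rewrite !evD !evZ ev0 !bl_mono_ite /ite2 /= in E; exact E.
- move=> da db dc dd de a b c d e ha hb hc hd he.
  have E := f_equal (fun f : nat -> V => f 2%N)
    (Lid da db dc dd de _ _ _ _ _ (hm _ _ ha) (hm _ _ hb) (hm _ _ hc)
       (hm _ _ hd) (hm _ _ he)).
  cbv beta in E; rewrite !evD !evZ nest_r nest_l nest_m nest_rr /ite3 /= in E.
  exact E.
- move=> d1 d2 d3' d4 d5 x1 x2 x3 x4 x5 h1 h2 h3 h4 h5.
  have E := f_equal (fun f : nat -> V => f 1%N)
    (Lid d1 d2 d3' d4 d5 _ _ _ _ _ (hm _ _ h1) (hm _ _ h2) (hm _ _ h3)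
       (hm _ _ h4) (hm _ _ h5)).
  cbv beta in E; rewrite !evD !evZ nest_r nest_l nest_m nest_rr /ite3 /= in E.
  by rewrite d3_E1 // E subrr.
Qed.

Lemma bwd : jlsts_identities (homog V0 V1) delta br ->
  jlsts_identities (homog V0 V1) delta psi -> cocycle3 V0 V1 delta br psi ->
  jlsts_identities (homog_lambda V0 V1) delta (br_lambda br psi).
Proof.
move=> [Bcl [Bsk [Bjac Bid]]] [Pcl [Psk [Pjac Pid]]] Hc.
split; [|split; [|split]].
- move=> da db dc p q r hp hq hr n; rewrite /br_lambda.
  have H3 : forall f m, (forall x y z, homog V0 V1 da x -> homog V0 V1 db y ->
      homog V0 V1 dc z -> homog V0 V1 (da (+) db (+) dc) (f x y z)) ->
      homog V0 V1 (da (+) db (+) dc) (ext3 f p q r m).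
    move=> f m Hf; rewrite /ext3.
    apply: (big_ind (homog V0 V1 (da (+) db (+) dc))); [exact: Hz | exact: HomD |].
    move=> i _; apply: (big_ind (homog V0 V1 (da (+) db (+) dc))); [exact: Hz | exact: HomD |].
    move=> j _; exact: Hf.
  apply: HomD; first by apply: H3 => x y z; exact: Bcl.
  case: n => [|n] /=; first exact: Hz.
  by apply: H3 => x y z; exact: Hev.
- move=> da db dc p q r hp hq hr; apply: functional_extensionality => n.
  rewrite evZ; apply: back_skew => a b c; rewrite !bl_mono_ite /ite2 (addnC b a).
  case: ifP => _; first exact: Bsk.
  case: ifP => _; first exact: Psk.
  by rewrite scaler0.
- move=> da db dc p q r hp hq hr; apply: functional_extensionality => n.
  rewrite !evD !evZ ev0; apply: back_jac => a b c; rewrite !bl_mono_ite.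
  rewrite (_ : (b + c + a = a + b + c)%N); last by lia.
  rewrite (_ : (c + a + b = a + b + c)%N); last by lia.
  rewrite /ite2; case: ifP => _; first exact: Bjac.
  case: ifP => _; first exact: Pjac.
  by rewrite !scaler0 !addr0.
- move=> da db dc dd de p q u v w hp hq hu hv hw.
  apply: functional_extensionality => n.
  rewrite !evD !evZ; apply: back4 => a b c d e.
  rewrite nest_r nest_l nest_m nest_rr; apply: comb.
  + exact: Bid.
  + have := Hc da db dc dd de _ _ _ _ _ (hp a) (hq b) (hu c) (hv d) (hw e).
    by rewrite d3_E1 //; move/eqP; rewrite subr_eq0 eq_sym => /eqP.
  + exact: Pid.
Qed.

End Basics.

Theorem theorem5p1 (K : fieldType) (V : lmodType K) (V0 V1 : {pred V})
    (delta : K) (br psi : V -> V -> V -> V) :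
  Z2grading V0 V1 ->
  (delta = 1 \/ delta = -1) ->
  is_JLSTS V0 V1 delta br ->
  trilinear psi -> even_map V0 V1 psi ->
  (jlsts_identities (homog_lambda V0 V1) delta (br_lambda br psi)
   <-> is_JLSTS V0 V1 delta psi /\ cocycle3 V0 V1 delta br psi).
Proof.
move=> [[z0 s0] [z1 s1] _ _] Hdel [Hbrt Bids] Hpsit Hev.
have Hd2 : delta * delta = 1.
  by case: Hdel => ->; rewrite ?mulr1 ?mulrNN ?mulr1.
have Hz : forall d, homog V0 V1 d 0 by case.
have HomD : forall d x y, homog V0 V1 d x -> homog V0 V1 d y ->
    homog V0 V1 d (x + y).
  move=> [] x y hx hy; rewrite /homog /= -[x]scale1r; [exact: s1 | exact: s0].
have Hsk := Bids.2.1.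
split.
  move=> L; have [P C] := fwd Hbrt Hpsit Hd2 Hsk Hev Hz L.
  by split; [split|].
move=> [[_ P] C]; exact: bwd.
Qed.
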